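(* Assume the following setting. (i) $X$ is a Banach space, and for each $0<h<1$, $X_h\subseteq X$ is a closed subspace. (ii) $\pi_h:X\to X_h$ is bounded and linear, with $\Vert\pi_h\Vert_{L(X)}$ bounded independently of $h$ and $\pi_hx=x$ for $x\in X_h$. (iii) $A:D(A)\subseteq X\to X$ is a closed, densely defined linear operator, and there are $\lambda\ge0$, $\delta\in(0,\pi/2)$, $M\ge1$ with $\sigma(\lambda+A)\subseteq\Sigma_\delta$ and $\Vert(z-\lambda-A)^{-1}x\Vert_X\le\frac M{|z|}\Vert x\Vert_X$ for all $x\in X$, $z\notin\Sigma_\delta$. (iv) $A_h:X_h\to X_h$ are linear operators with $\sigma(\lambda+A_h)\subseteq\Sigma_\delta$ and $\Vert(z-\lambda-A_h)^{-1}x\Vert_X\le\frac M{|z|}\Vert x\Vert_X$ for all $x\in X_h$, $z\notin\Sigma_\delta$, for all $h$. (v) For some $r>0$, $\Vert((\lambda+A)^{-1}-(\lambda+A_h)^{-1}\pi_h)x\Vert_X\le Ch^r\Vert x\Vert_X$ for all $x\in X$. (vi) $\Vert A_hx\Vert_X\le Ch^{-r}\Vert x\Vert_X$ for all $x\in X_h$. Then there is $C>0$, independent of $h$, such that $$\Vert(\lambda+A_h)\pi_hx\Vert_X\le C\Vert(\lambda+A)x\Vert_X\quad\text{for all } x\in D(A).$$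
   Context: $\Sigma_\delta:=\{z\in\mathbb{C}\setminus\{0\}:|\arg z|<\delta\}$. *)

(* Defs.v *)
From HB Require Import structures.
From mathcomp Require Import all_boot all_order all_algebra.
From mathcomp Require Import complex.
From mathcomp Require Import all_classical all_reals all_analysis.
Import Order.TTheory GRing.Theory Num.Theory.

Set Implicit Arguments.
Unset Strict Implicit.
Unset Printing Implicit Defensive.

Local Open Scope ring_scope.
Local Open Scope classical_set_scope.
Local Open Scope complex_scope.

(* Complex Banach spaces: V : completeNormedModType R[i].  Norms `|x| take
   values in R[i] (they are real, nonnegative). *)

(* The sector Sigma_delta = { z in C \ {0} : |arg z| < delta }, written
   literally: z <> 0 and z = |z| e^{i theta} for some theta with |theta| < delta. *)
Definition sector (R : realType) (delta : R) : set R[i] :=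
  [set z | z != 0 /\
     exists theta : R, `|theta| < delta /\
       z = `|z| * ((cos theta)%:C + 'i * (sin theta)%:C)].

Definition lin_subspace (R : realType) (V : normedModType R[i]) (S : set V) :=
  S 0 /\ forall (a : R[i]) (x y : V), S x -> S y -> S (a *: x + y).

Definition linear_on (R : realType) (V : normedModType R[i]) (D : set V)
    (T : V -> V) :=
  forall (a : R[i]) (x y : V), D x -> D y -> T (a *: x + y) = a *: T x + T y.

Definition closed_op (R : realType) (V : normedModType R[i]) (D : set V)
    (T : V -> V) :=
  closed [set p : V * V | D p.1 /\ p.2 = T p.1].

Definition inverse_on (R : realType) (V : normedModType R[i]) (D Y : set V)
    (T S : V -> V) :=
  (forall y, Y y -> D (S y) /\ T (S y) = y) /\ (forall x, D x -> S (T x) = x).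

Definition lshift_op (R : realType) (V : normedModType R[i]) (lam : R[i])
    (T : V -> V) : V -> V := fun x => lam *: x + T x.

Definition zsub_op (R : realType) (V : normedModType R[i]) (z : R[i])
    (T : V -> V) : V -> V := fun x => z *: x - T x.

(* resolvent set of the operator T : D (subset of Y) -> Y, with Y the ambient
   space: z - T : D -> Y is bijective with bounded inverse *)
Definition resolvent_set (R : realType) (V : normedModType R[i]) (D Y : set V)
    (T : V -> V) : set R[i] :=
  [set z | exists S : V -> V, inverse_on D Y (zsub_op z T) S /\
      exists c : R, forall y, Y y -> `|S y| <= c%:C * `|y|].

Definition spectrum (R : realType) (V : normedModType R[i]) (D Y : set V)
    (T : V -> V) : set R[i] := ~` resolvent_set D Y T.

Definition resolvent_bound (R : realType) (V : normedModType R[i]) (D Y : set V)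
    (T : V -> V) (delta M : R) :=
  forall z : R[i], z != 0 -> ~ sector delta z ->
  forall S : V -> V, inverse_on D Y (zsub_op z T) S ->
  forall y, Y y -> `|S y| <= (M%:C / `|z|) * `|y|.

(* Main.v *)
Require Import Defs.
From HB Require Import structures.
From mathcomp Require Import all_boot all_order all_algebra.
From mathcomp Require Import complex.
From mathcomp Require Import lra ring.
From mathcomp Require Import all_classical all_reals all_analysis.
Import Order.TTheory GRing.Theory Num.Theory.
Local Open Scope ring_scope.
Local Open Scope classical_set_scope.
Local Open Scope complex_scope.


Set Implicit Arguments.
Section Helpers.
Variables (R : realType) (V : normedModType R[i]).

Lemma ls_add (D : set V) : lin_subspace D -> forall x y, D x -> D y -> D (x + y).
Proof. by move=> [_ H] x y Dx Dy; have := H 1 x y Dx Dy; rewrite scale1r. Qed.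

Lemma ls_opp (D : set V) : lin_subspace D -> forall x, D x -> D (- x).
Proof.
move=> [D0 H] x Dx; have := H (-1) x 0 Dx D0.
by rewrite addr0 scaleN1r.
Qed.

Lemma ls_sub (D : set V) : lin_subspace D -> forall x y, D x -> D y -> D (x - y).
Proof. by move=> HD x y Dx Dy; apply: ls_add => //; apply: ls_opp. Qed.

Lemma lo_0 (D : set V) T : lin_subspace D -> linear_on D T -> T 0 = 0.
Proof.
move=> [D0 _] HT; have := HT 1 0 0 D0 D0.
rewrite !scale1r addr0 => /(congr1 (fun z => z - T 0)).
by rewrite subrr addrK => /esym.
Qed.

Lemma lo_add (D : set V) T : lin_subspace D -> linear_on D T ->
  forall x y, D x -> D y -> T (x + y) = T x + T y.
Proof. by move=> _ HT x y Dx Dy; have := HT 1 x y Dx Dy; rewrite !scale1r. Qed.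

Lemma lo_opp (D : set V) T : lin_subspace D -> linear_on D T ->
  forall x, D x -> T (- x) = - T x.
Proof.
move=> HD HT x Dx; have := HT (-1) x 0 Dx HD.1.
by rewrite addr0 !scaleN1r (lo_0 HD HT) addr0.
Qed.

Lemma lo_sub (D : set V) T : lin_subspace D -> linear_on D T ->
  forall x y, D x -> D y -> T (x - y) = T x - T y.
Proof.
move=> HD HT x y Dx Dy.
by rewrite (lo_add HD HT) ?(lo_opp HD HT) //; apply: ls_opp.
Qed.

Lemma lo_shift (D : set V) T (l : R[i]) : linear_on D T ->
  linear_on D (lshift_op l T).
Proof.
move=> HT a x y Dx Dy; rewrite /lshift_op HT //.
rewrite scalerDr scalerDr scalerA scalerA mulrC.
rewrite -!addrA; congr (_ + _); rewrite [RHS]addrC -!addrA; congr (_ + _).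
by rewrite addrC.
Qed.

Lemma get_inv (D Y : set V) (T : V -> V) (delta : R) :
  lin_subspace D -> linear_on D T ->
  spectrum D Y T `<=` sector delta ->
  exists S, inverse_on D Y T S.
Proof.
move=> HD HT Hs.
have : resolvent_set D Y T 0.
  apply: contrapT => H0; have := Hs 0 H0; by case=> /eqP.
case=> S [[H1 H2] _]; exists (fun y => - S y); split.
- move=> y Yy; have [DS eS] := H1 y Yy; split; first exact: ls_opp.
  rewrite (lo_opp HD HT) //; move: eS; rewrite /zsub_op scale0r sub0r.
  done.
- move=> x Dx; have := H2 (- x) (ls_opp HD _ Dx).
  rewrite /zsub_op scale0r sub0r (lo_opp HD HT) // opprK => ->.
  by rewrite opprK.
Qed.

End Helpers.
Unset Implicit Arguments.

Lemma fin_ineq (R : realType) (K lam C p q : R) : 0 <= K -> 0 <= lam -> 0 < C ->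
  0 < p -> p <= 1 -> q * p = 1 ->
  K + (lam + C * q) * (K * (C * p)) <= K + lam * K * C + K * C ^+ 2 + 1.
Proof.
move=> K0 l0 C0 p0 p1 qp.
have -> : (lam + C * q) * (K * (C * p)) = lam * K * C * p + K * C ^+ 2 * (q * p) by ring.
rewrite qp mulr1.
have : lam * K * C * p <= lam * K * C.
  rewrite -[X in _ <= X]mulr1; apply: ler_wpM2l => //.
  by apply: mulr_ge0; [apply: mulr_ge0|apply: ltW].
lra.
Qed.

Theorem lemma2p10 (R : realType) (X : completeNormedModType R[i])
  (DA : set X) (A : X -> X) (Xh : R -> set X) (pih : R -> X -> X)
  (Ah : R -> X -> X) (lam delta M r C : R)
  (* (i) *)
  (HXh : forall h : R, 0 < h < 1 -> lin_subspace (Xh h) /\ closed (Xh h))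
  (* (ii) *)
  (Hpi_lin : forall h : R, 0 < h < 1 -> linear_on setT (pih h))
  (Hpi_range : forall h : R, 0 < h < 1 -> forall x, Xh h (pih h x))
  (Hpi_proj : forall h : R, 0 < h < 1 -> forall x, Xh h x -> pih h x = x)
  (Hpi_bdd : exists K : R, forall h : R, 0 < h < 1 ->
                forall x, `|pih h x| <= K%:C * `|x|)
  (* (iii) *)
  (HDA : lin_subspace DA) (HA_lin : linear_on DA A) (HA_closed : closed_op DA A)
  (HA_dense : closure DA = setT)
  (Hlam : 0 <= lam) (Hdelta : 0 < delta < pi / 2) (HM : 1 <= M)
  (HA_spec : spectrum DA setT (lshift_op (lam%:C) A) `<=` sector delta)
  (HA_res : resolvent_bound DA setT (lshift_op (lam%:C) A) delta M)
  (* (iv) *)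
  (HAh_range : forall h : R, 0 < h < 1 -> forall x, Xh h x -> Xh h (Ah h x))
  (HAh_lin : forall h : R, 0 < h < 1 -> linear_on (Xh h) (Ah h))
  (HAh_spec : forall h : R, 0 < h < 1 ->
     spectrum (Xh h) (Xh h) (lshift_op (lam%:C) (Ah h)) `<=` sector delta)
  (HAh_res : forall h : R, 0 < h < 1 ->
     resolvent_bound (Xh h) (Xh h) (lshift_op (lam%:C) (Ah h)) delta M)
  (* (v) *)
  (Hr : 0 < r) (HC : 0 < C)
  (Happrox : forall h : R, 0 < h < 1 -> forall S Sh : X -> X,
     inverse_on DA setT (lshift_op (lam%:C) A) S ->
     inverse_on (Xh h) (Xh h) (lshift_op (lam%:C) (Ah h)) Sh ->
     forall x, `|S x - Sh (pih h x)| <= (C * h `^ r)%:C * `|x|)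
  (* (vi) *)
  (Hinv : forall h : R, 0 < h < 1 -> forall x, Xh h x ->
     `|Ah h x| <= (C * h `^ (- r))%:C * `|x|) :
  exists C' : R, 0 < C' /\
    forall h : R, 0 < h < 1 -> forall x, DA x ->
      `|lshift_op (lam%:C) (Ah h) (pih h x)| <= C'%:C * `|lshift_op (lam%:C) A x|.
Proof.
Proof.
have [K HK] := Hpi_bdd.
set K' := `|K|.
have K'0 : 0 <= K' by rewrite normr_ge0.
exists (K' + lam * K' * C + K' * C ^+ 2 + 1).
split.
  have : 0 <= lam * K' * C by apply: mulr_ge0; [apply: mulr_ge0|apply: ltW].
  have : 0 <= K' * C ^+ 2 by apply: mulr_ge0 => //; apply: sqr_ge0.
  lra.
move=> h hh x Dx.
have [HXl _] := HXh h hh.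
have [S HS] := get_inv HDA (lo_shift (lam%:C) HA_lin) HA_spec.
have [Sh HSh] := get_inv HXl (lo_shift (lam%:C) (HAh_lin h hh)) (HAh_spec h hh).
set T := lshift_op (lam%:C) A.
set Th := lshift_op (lam%:C) (Ah h).
have ThL : linear_on (Xh h) Th by apply: lo_shift; apply: HAh_lin.
set y := T x.
have Sy : S y = x by apply: HS.2.
set u := Sh (pih h y).
have [Xu Thu] := HSh.1 _ (Hpi_range h hh y).
set v := pih h (x - u).
have Xv : Xh h v by apply: Hpi_range.
have ev : pih h x = u + v.
  have lsT : lin_subspace [set: X] by [].
  rewrite /v (lo_sub lsT (Hpi_lin h hh)) //.
  by rewrite (Hpi_proj h hh u Xu) addrC subrK.
have eT : Th (pih h x) = pih h y + Th v.
  by rewrite ev (lo_add HXl ThL) // -Thu.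
have hr0 : 0 < h `^ r by apply: powR_gt0; case/andP: hh.
have hr1 : h `^ r <= 1.
  rewrite -(powRr0 h); apply: (ger_powR (a := h)) (ltW Hr).
  by case/andP: hh => ? ?; rewrite (ltW _) // andbT.
have hri : h `^ (- r) * h `^ r = 1 by rewrite powRN mulVf // gt_eqF.
have ny0 : 0 <= `|y| by [].
have Kle : K%:C <= K'%:C by rewrite lecR /K' ler_norm.
have B1 : `|pih h y| <= K'%:C * `|y|.
  by apply: le_trans (HK h hh y) _; apply: ler_wpM2r.
have Bxu : `|x - u| <= (C * h `^ r)%:C * `|y|.
  by rewrite -{1}Sy; apply: Happrox.
have Bv : `|v| <= (K' * (C * h `^ r))%:C * `|y|.
  apply: le_trans (HK h hh _) _.
  apply: le_trans (ler_wpM2r (normr_ge0 _) Kle) _.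
  rewrite rmorphM -mulrA; apply: ler_wpM2l => //.
  by rewrite ler0c.
have BTv : `|Th v| <= (lam + C * h `^ (- r))%:C * `|v|.
  rewrite /Th /lshift_op; apply: le_trans (ler_normD _ _) _.
  rewrite normrZ rmorphD mulrDl; apply: lerD; last exact: Hinv.
  by rewrite ger0_norm // ler0c.
have BTv2 : `|Th v| <= ((lam + C * h `^ (- r)) * (K' * (C * h `^ r)))%:C * `|y|.
  apply: le_trans BTv _; rewrite rmorphM -mulrA; apply: ler_wpM2l => //.
  rewrite ler0c; apply: addr_ge0 => //; apply: mulr_ge0; [exact: ltW|exact: powR_ge0].
rewrite -/Th -/T -/y eT; apply: le_trans (ler_normD _ _) _.
apply: le_trans (lerD B1 BTv2) _.
rewrite -mulrDl -rmorphD; apply: ler_wpM2r => //; rewrite lecR.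
exact: (@fin_ineq _ _ _ _ _ _ K'0 Hlam HC hr0 hr1 hri).
Qed.
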